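(* Let $1<d\le n$ be integers, let $C$ be a real symmetric $n\times n$ matrix with unit diagonal, and let $T_{n,d}=\{Y\in\mathbb{R}^{n\times d}: \|Y_i\|_2=1 \text{ for every row } Y_i\}$. For $Y\in T_{n,d}$ set $\psi=YY^T-C$ and $F_Y=2\psi Y$. Suppose $Y\in T_{n,d}$ satisfies $F_Y-\operatorname{diag}(F_YY^T)\,Y=0$, define the diagonal matrix $\lambda=\tfrac12\operatorname{diag}(F_YY^T)$ and $C(\lambda)=C+\lambda$. If $YY^T$ has the $d$ largest (in absolute value) eigenvalues of $C(\lambda)$, i.e. $YY^T$ equals a matrix obtained from an eigenvalue decomposition $C(\lambda)=QDQ^T$ ($Q$ orthogonal, $D$ diagonal) by keeping only $d$ eigenvalues of largest absolute value and replacing the others by $0$, then $YY^T$ is a global minimizer of the problem \[ \text{minimize } \tfrac12\sum_{i<j}(C_{ij}-X_{ij})^2 \ \text{ over symmetric } X\in\mathbb{R}^{n\times n} \text{ with } \operatorname{rank}(X)\le d,\ X_{ii}=1\ (i=1,\dots,n),\ X\succeq 0. \]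
   Context: For a square matrix $A$, $\operatorname{diag}(A)$ denotes the diagonal matrix with $\operatorname{diag}(A)_{ij}=\delta_{ij}A_{ij}$. $X\succeq 0$ means positive semidefinite. The condition $F_Y-\operatorname{diag}(F_YY^T)Y=0$ says that $Y$ is a stationary point on $T_{n,d}$ of $F(Y)=\tfrac12\|YY^T-C\|_F^2$. *)

(* Defs.v *)
From HB Require Import structures.
From mathcomp Require Import all_boot all_order all_algebra.
From mathcomp Require Import reals.
Set Implicit Arguments. Unset Strict Implicit. Unset Printing Implicit Defensive.
Import Order.TTheory GRing.Theory Num.Theory.
Local Open Scope ring_scope.

Definition mdiag {R : realType} {n : nat} (A : 'M[R]_n) : 'M[R]_n :=
  diag_mx (\row_i A i i).

Definition row_norm {R : realType} {n d : nat} (Y : 'M[R]_(n, d)) (i : 'I_n) : R :=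
  Num.sqrt (\sum_(j < d) Y i j ^+ 2).

Definition in_T {R : realType} {n d : nat} (Y : 'M[R]_(n, d)) : Prop :=
  forall i : 'I_n, row_norm Y i = 1.

Definition psd {R : realType} {n : nat} (X : 'M[R]_n) : Prop :=
  forall v : 'cV[R]_n, 0 <= (v^T *m X *m v) 0 0.

Definition orthogonal_mx {R : realType} {n : nat} (Q : 'M[R]_n) : Prop :=
  Q *m Q^T = 1%:M /\ Q^T *m Q = 1%:M.

Definition objective {R : realType} {n : nat} (C X : 'M[R]_n) : R :=
  2^-1 * \sum_(i < n) \sum_(j < n | (i < j)%N) (C i j - X i j) ^+ 2.

Definition feasible {R : realType} {n : nat} (d : nat) (X : 'M[R]_n) : Prop :=
  [/\ X^T = X, (\rank X <= d)%N, (forall i, X i i = 1) & psd X].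

Definition global_minimizer {R : realType} {n : nat} (d : nat) (C X : 'M[R]_n) : Prop :=
  feasible d X /\ forall X' : 'M[R]_n, feasible d X' -> objective C X <= objective C X'.

Definition top_d_eig_truncation {R : realType} {n : nat} (d : nat) (M X : 'M[R]_n) : Prop :=
  exists (Q : 'M[R]_n) (ev : 'rV[R]_n) (S : {set 'I_n}),
    [/\ orthogonal_mx Q,
        M = Q *m diag_mx ev *m Q^T,
        #|S| = d,
        (forall i j, i \in S -> j \notin S -> `|ev 0 j| <= `|ev 0 i|) &
        X = Q *m diag_mx (\row_i (if i \in S then ev 0 i else 0)) *m Q^T].

(* Main.v *)
Require Import Defs.
From HB Require Import structures.
From mathcomp Require Import all_boot all_order all_algebra.
From mathcomp Require Import reals.
From mathcomp Require Import ring lra.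
Import Order.TTheory GRing.Theory Num.Theory.
Local Open Scope ring_scope.
Set Warnings "-notation-overridden,-ambiguous-paths".

Definition fro {R : realType} {m n : nat} (A : 'M[R]_(m,n)) : R :=
  \sum_i \sum_j A i j ^+ 2.

Lemma fro_tr (R : realType) m n (A : 'M[R]_(m,n)) : fro A = \tr (A *m A^T).
Proof.
rewrite /fro /mxtrace; apply: eq_bigr => i _; rewrite !mxE.
by apply: eq_bigr => j _; rewrite !mxE expr2.
Qed.

Lemma fro_ge0 (R : realType) m n (A : 'M[R]_(m,n)) : 0 <= fro A.
Proof. by apply: sumr_ge0 => i _; apply: sumr_ge0 => j _; apply: sqr_ge0. Qed.

Lemma fro_orth (R : realType) n (Q A : 'M[R]_n) :
  Q^T *m Q = 1%:M -> fro (Q *m A *m Q^T) = fro A.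
Proof.
move=> HQ; rewrite !fro_tr !trmx_mul trmxK.
rewrite -!mulmxA (mulmxA Q^T) HQ mul1mx mxtrace_mulC -!mulmxA HQ mulmx1.
by rewrite mxtrace_mulC.
Qed.

Lemma fro_diag (R : realType) n (v : 'rV[R]_n) : fro (diag_mx v) = \sum_i v 0 i ^+ 2.
Proof.
rewrite fro_tr tr_diag_mx mul_diag_mx /mxtrace; apply: eq_bigr => i _.
by rewrite !mxE eqxx mulr1n expr2.
Qed.

Lemma fro_addO (R : realType) m n (E1 E2 : 'M[R]_(m,n)) :
  E1 *m E2^T = 0 -> fro E1 <= fro (E1 + E2).
Proof.
move=> H; have H2 : E2 *m E1^T = 0 by rewrite -(trmxK E2) -trmx_mul H trmx0.
rewrite !fro_tr linearD /= !(mulmxDl, mulmxDr) H H2 !addr0 add0r mxtraceD.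
by rewrite lerDl -fro_tr fro_ge0.
Qed.
Lemma proj_exists (R : realType) n (W : 'M[R]_n) :
  exists P : 'M[R]_n, [/\ P^T = P, P *m P = P, W *m P = W & \tr P = (\rank W)%:R].
Proof.
set B := row_base W.
have BF : row_free B := row_base_free W.
have WB : (W <= B)%MS by rewrite eq_row_base.
clearbody B.
set G := B *m B^T.
have Gu : G \in unitmx.
  rewrite -row_free_unit; apply: inj_row_free => u Hu.
  have H0 : (u *m B) *m (u *m B)^T = 0.
    by rewrite trmx_mul mulmxA -(mulmxA u B) -/G Hu mul0mx.
  have Hs : \sum_k ((u *m B) 0 k) ^+ 2 = 0.
    move/(congr1 (fun M : 'M[R]_1 => M 0 0)): H0; rewrite !mxE => H0.
    by rewrite -[RHS]H0; apply: eq_bigr => k _; rewrite !mxE expr2.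
  have HuB : u *m B = 0.
    apply/rowP => k; rewrite [RHS]mxE; apply/eqP; rewrite -sqrf_eq0; apply/eqP.
    by apply: (psumr_eq0P _ Hs) => // j _; apply: sqr_ge0.
  by apply: (row_free_inj BF); rewrite HuB mul0mx.
have GT : G^T = G by rewrite /G trmx_mul trmxK.
exists (B^T *m invmx G *m B); split.
- by rewrite !trmx_mul trmxK trmx_inv GT mulmxA.
- by rewrite -!mulmxA (mulmxA B) -/G (mulmxA G) mulmxV // mul1mx.
- have [A HA] := submxP WB.
  transitivity (A *m B *m (B^T *m invmx G *m B)); first by rewrite -HA.
  rewrite -!mulmxA (mulmxA B) -/G (mulmxA G) mulmxV // mul1mx.
  by symmetry; exact: HA.
- by rewrite mxtrace_mulC mulmxA -/G mulmxV // mxtrace1.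
Qed.
Lemma key (R : realType) n (ev : 'rV[R]_n) (W : 'M[R]_n) :
  exists p : 'I_n -> R, [/\ forall i, 0 <= p i <= 1, \sum_i p i = (\rank W)%:R &
     \sum_i ev 0 i ^+ 2 * (1 - p i) <= fro (diag_mx ev - W)].
Proof.
have [P [PT PP WP trP]] := @proj_exists R n W.
have PTij : forall a b, P a b = P b a by move=> a b; rewrite -{1}PT mxE.
exists (fun i => P i i); split.
- move=> i.
  have Hs : P i i = \sum_j P i j ^+ 2.
    move/(congr1 (fun M : 'M[R]_n => M i i)): PP; rewrite mxE => <-.
    by apply: eq_bigr => j _; rewrite expr2 (PTij j i).
  have Hge : P i i ^+ 2 <= \sum_j P i j ^+ 2.
    rewrite (bigD1 i) //= lerDl; apply: sumr_ge0 => j _; apply: sqr_ge0.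
  rewrite -Hs in Hge.
  have H0 : 0 <= P i i by rewrite Hs; apply: sumr_ge0 => j _; apply: sqr_ge0.
  by apply/andP; split => //; nra.
- by rewrite -trP.
set D := diag_mx ev.
have HD : D - W = D *m (1%:M - P) + (D - W) *m P.
  by rewrite mulmxBr mulmx1 mulmxBl WP addrA subrK.
rewrite HD; apply: (le_trans _ (@fro_addO R _ _ _ _ _)); last first.
  rewrite trmx_mul PT mulmxA -(mulmxA D) mulmxBl mul1mx PP subrr mulmx0.
  by rewrite mul0mx.
have I1 : (1%:M - P)^T = 1%:M - P by rewrite linearB /= trmx1 PT.
have I2 : (1%:M - P) *m (1%:M - P) = 1%:M - P.
  by rewrite mulmxBr mulmx1 mulmxBl mul1mx PP subrr subr0.
rewrite fro_tr trmx_mul I1 tr_diag_mx -/D mulmxA -(mulmxA D) I2.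
rewrite /D mul_diag_mx mul_mx_diag /mxtrace le_eqVlt; apply/orP; left; apply/eqP.
apply: eq_bigr => i _; rewrite !mxE eqxx mulr1n; ring.
Qed.
Lemma eq_ler_subr_ge0 (R : realType) (x y : R) : x <= y -> 0 <= y - x.
Proof. by rewrite subr_ge0. Qed.

Lemma comb (R : realType) n (a p : 'I_n -> R) (S : {set 'I_n}) :
  (forall i, 0 <= a i) -> (forall i, 0 <= p i <= 1) -> \sum_i p i <= #|S|%:R ->
  (forall i j, i \in S -> j \notin S -> a j <= a i) ->
  \sum_(i in ~: S) a i <= \sum_i a i * (1 - p i).
Proof.
move=> a0 p01 psum top.
have p1 : forall i, 0 <= 1 - p i by move=> i; have /andP[_ ?] := p01 i; rewrite subr_ge0.
have p0 : forall i, 0 <= p i by move=> i; have /andP[? _] := p01 i.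
have -> : \sum_(i in ~: S) a i = \sum_(i | i \notin S) a i.
  by apply: eq_bigl => i; rewrite in_setC.
case: (pickP (fun j => j \notin S)) => [j0 j0S | none]; last first.
  rewrite big_pred0; last by move=> i; rewrite none.
  by apply: sumr_ge0 => i _; apply: mulr_ge0.
pose t := a [arg max_(j > j0 | j \notin S) a j]%O.
have [tS tSc] : (forall i, i \in S -> t <= a i) /\ (forall j, j \notin S -> a j <= t).
  rewrite /t; case: arg_maxP => //= k kS kmax; split => [i iS| j jS].
    exact: top.
  exact: kmax.
have t0 : 0 <= t by apply: le_trans (a0 j0) (tSc _ j0S).
rewrite [leRHS](bigID (fun i => i \in S)) /=.
have H1 : \sum_(i | i \notin S) a i * p i <= t * \sum_(i | i \notin S) p i.
  rewrite mulr_sumr; apply: ler_sum => i iS; apply: ler_wpM2r => //; exact: tSc.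
have H2 : t * \sum_(i in S) (1 - p i) <= \sum_(i in S) a i * (1 - p i).
  rewrite mulr_sumr; apply: ler_sum => i iS; apply: ler_wpM2r => //; exact: tS.
have H3 : \sum_(i in S) (1 - p i) = #|S|%:R - \sum_(i in S) p i.
  by rewrite sumrB sumr_const.
have H4 : \sum_i p i = \sum_(i in S) p i + \sum_(i | i \notin S) p i.
  by rewrite (bigID (fun i => i \in S)).
have H5 : \sum_(i | i \notin S) a i * (1 - p i) =
    \sum_(i | i \notin S) a i - \sum_(i | i \notin S) a i * p i.
  by rewrite -sumrB; apply: eq_bigr => i _; ring.
rewrite H5; rewrite H3 in H2; rewrite H4 in psum.
have := mulr_ge0 t0 (@eq_ler_subr_ge0 R _ _ psum).
nra.
Qed.
Lemma sym_split (R : realType) n (E : 'M[R]_n) : E^T = E ->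
  fro E = \sum_i E i i ^+ 2 + 2 * \sum_(i < n) \sum_(j < n | (i < j)%N) E i j ^+ 2.
Proof.
move=> ET.
have Es : forall i j : 'I_n, E j i = E i j.
  by move=> i j; have := congr1 (fun M : 'M[R]_n => M i j) ET; rewrite mxE.
have step : forall i : 'I_n, \sum_j E i j ^+ 2 =
   \sum_(j < n) (if (i < j)%N then E i j ^+ 2 else 0) +
   \sum_(j < n) (if (j < i)%N then E i j ^+ 2 else 0) + E i i ^+ 2.
  move=> i.
  have -> : E i i ^+ 2 = \sum_(j < n) (if j == i then E i j ^+ 2 else 0).
    by rewrite -big_mkcond big_pred1_eq.
  rewrite -!big_split /=; apply: eq_bigr => j _.
  case: (ltngtP i j) => h.
  - have -> : (j == i) = false by apply/eqP => E'; move: h; rewrite E' ltnn.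
    by rewrite addr0 addr0.
  - have -> : (j == i) = false by apply/eqP => E'; move: h; rewrite E' ltnn.
    by rewrite addr0 add0r.
  - have -> : j = i by apply/val_inj.
    by rewrite eqxx add0r add0r.
rewrite /fro (eq_bigr _ (fun i _ => step i)) !big_split /=.
have -> : \sum_(i < n) \sum_(j < n) (if (j < i)%N then E i j ^+ 2 else 0) =
          \sum_(i < n) \sum_(j < n) (if (i < j)%N then E i j ^+ 2 else 0).
  rewrite exchange_big /=; apply: eq_bigr => i _; apply: eq_bigr => j _.
  by rewrite Es.
under [X in _ = _ + 2 * X]eq_bigr do rewrite big_mkcond /=.
ring.
Qed.
Lemma obj_eq (R : realType) n (C L A : 'M[R]_n) :
  C^T = C -> A^T = A -> L^T = L -> (forall i, A i i = 1) ->
  (forall i j, i != j -> L i j = 0) ->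
  objective C A = 4^-1 * (fro (C + L - A) - \sum_i (C i i + L i i - 1) ^+ 2).
Proof.
move=> CT AT LT A1 L0.
have ST : (C + L - A)^T = C + L - A by rewrite linearB linearD /= CT LT AT.
rewrite (@sym_split R n _ ST).
have -> : \sum_i (C + L - A) i i ^+ 2 = \sum_i (C i i + L i i - 1) ^+ 2.
  by apply: eq_bigr => i _; rewrite !mxE A1.
have -> : \sum_(i < n) \sum_(j < n | (i < j)%N) (C + L - A) i j ^+ 2 =
          \sum_(i < n) \sum_(j < n | (i < j)%N) (C i j - A i j) ^+ 2.
  apply: eq_bigr => i _; apply: eq_bigr => j hij; rewrite !mxE L0 ?addr0 //.
  by rewrite -val_eqE /= (ltn_eqF hij).
by rewrite /objective; field.
Qed.
Theorem theorem6p3 (R : realType) (n d : nat) (C : 'M[R]_n) (Y : 'M[R]_(n, d)) :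
  (1 < d)%N -> (d <= n)%N ->
  C^T = C -> (forall i, C i i = 1) ->
  in_T Y ->
  let psi := Y *m Y^T - C in
  let FY := 2%:R *: (psi *m Y) in
  FY - mdiag (FY *m Y^T) *m Y = 0 ->
  let lambda := 2^-1 *: mdiag (FY *m Y^T) in
  top_d_eig_truncation d (C + lambda) (Y *m Y^T) ->
  global_minimizer d C (Y *m Y^T).
Proof.
move=> _ _ CT C1 HY psi FY _ lambda [Q [ev [S [[QQt QtQ] HM Scard Stop HX]]]].
have Xdiag : forall i, (Y *m Y^T) i i = 1.
  move=> i; have := HY i; rewrite /row_norm => Hs.
  have s0 : 0 <= \sum_j Y i j ^+ 2 by apply: sumr_ge0 => j _; apply: sqr_ge0.
  transitivity (\sum_j Y i j ^+ 2).
    by rewrite mxE; apply: eq_bigr => j _; rewrite mxE expr2.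
  by rewrite -(sqr_sqrtr s0) Hs expr1n.
have feasX : feasible d (Y *m Y^T).
  split.
  - by rewrite trmx_mul trmxK.
  - by apply: (leq_trans (mxrankM_maxl _ _)); apply: rank_leq_col.
  - exact: Xdiag.
  - move=> v.
    have -> : v^T *m (Y *m Y^T) *m v = (v^T *m Y) *m (v^T *m Y)^T.
      by rewrite trmx_mul trmxK !mulmxA.
    rewrite mxE; apply: sumr_ge0 => k _; rewrite [X in _ * X]mxE -expr2.
    exact: sqr_ge0.
split => // X' [X'T X'rk X'1 _].
have LT : lambda^T = lambda by rewrite /lambda /mdiag linearZ /= tr_diag_mx.
have L0 : forall i j, i != j -> lambda i j = 0.
  by move=> i j /negbTE hij; rewrite /lambda /mdiag !mxE hij mulr0n mulr0.
have XT : (Y *m Y^T)^T = Y *m Y^T by rewrite trmx_mul trmxK.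
rewrite (@obj_eq R n _ _ _ CT XT LT Xdiag L0) (@obj_eq R n _ _ _ CT X'T LT X'1 L0).
apply: ler_wpM2l; first by rewrite invr_ge0.
rewrite lerD2r.
set D := diag_mx ev.
set DS := diag_mx (\row_i (if i \in S then ev 0 i else 0)).
have E1 : fro (C + lambda - Y *m Y^T) = \sum_(i in ~: S) ev 0 i ^+ 2.
  rewrite HX HM -mulmxBl -mulmxBr fro_orth // -linearB /= fro_diag.
  rewrite [RHS]big_mkcond; apply: eq_bigr => i _.
  by rewrite !mxE in_setC; case: (i \in S) => /=; rewrite ?subrr ?subr0 ?expr0n.
set W := Q^T *m X' *m Q.
have E2 : fro (C + lambda - X') = fro (D - W).
  rewrite -(@fro_orth R n Q (D - W) QtQ) mulmxBr mulmxBl -HM /W !mulmxA QQt mul1mx.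
  by rewrite -mulmxA QQt mulmx1.
have Wrk : (\rank W <= d)%N.
  apply: (leq_trans (mxrankM_maxl _ _)); apply: (leq_trans (mxrankM_maxr _ _)).
  exact: X'rk.
rewrite E1 E2.
have [p [p01 psum Hp]] := @key R n ev W.
apply: le_trans Hp.
apply: comb => //.
- by move=> i; apply: sqr_ge0.
- by rewrite psum Scard ler_nat.
- move=> i j iS jS; have := Stop i j iS jS.
  rewrite -(real_normK (num_real (ev 0 i))) -(real_normK (num_real (ev 0 j))).
  have := normr_ge0 (ev 0 j); move=> h0 h; nra.
Qed.
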